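(* (Perfect ciphertext blindness of SymmetricBlind against the Decryptor.) In the probabilistic model described in the context, for all $m\in\mathbb{Z}_p$, $c'\in\mathbb{Z}_p$ and $m'\in\mathbb{Z}_p$ with $\Pr[C'=c'\cap M'=m']>0$, $$\Pr[M=m\mid C'=c'\cap M'=m']=\Pr[M=m].$$
   Context: Let $p\ge5$ be a prime; $\mathbb{Z}_n=\{0,\dots,n-1\}$ and $x\bmod n$ is the least nonnegative residue. 2PAD: key $(x_k,y_k)\in\mathbb{Z}_p^2$; encrypting $m\in\mathbb{Z}_p$ with randomness $z\in\mathbb{Z}_p\setminus\{0\}$ gives $c=(p x_k z^2+p y_k z+pm+z)\bmod p^2$; decrypting $c\in\mathbb{Z}_{p^2}$: $z=c\bmod p$, $t=(-p x_k z^2-p y_k z+c)\bmod p^2$, output $(t-z)/p$. Probabilistic model of the blind decryption in the scheme SymmetricBlind with $1\le L\le p-1$: the key $(X,Y)$ has $X,Y$ independent and uniform on $\mathbb{Z}_p$; $M_1,\dots,M_L$ are arbitrary jointly distributed random plaintexts in $\mathbb{Z}_p$; the encryption randomness $(z_1,\dots,z_L)$ consists of pairwise distinct elements of $\mathbb{Z}_p\setminus\{0\}$, each $z_j$ being (marginally) uniform on $\mathbb{Z}_p\setminus\{0\}$ (e.g. $(z_1,\dots,z_L)$ uniform over all tuples of distinct nonzero residues); $C_j$ is the 2PAD encryption of $M_j$ under $(X,Y)$ with randomness $z_j$; Alice's chosen index $I\in\{1,\dots,L\}$ is a random variable; and the three families $(X,Y)$, $(z_1,\dots,z_L)$, $(I,M_1,\dots,M_L)$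 are mutually independent. Alice sends $C'=C_I\bmod p$ to the Decryptor, who replies $M'=\mathrm{Dec}_{2PAD}(X,Y,C')$; Alice's output is $M=((C_I-C'+pM')\bmod p^2)/p$ (which equals $M_I$). (The ciphertexts $C_1,\dots,C_L$ are assumed hidden from the Decryptor.) *)

(* Defs.v *)
From HB Require Import structures.
From mathcomp Require Import all_boot all_order all_algebra.
Set Implicit Arguments. Unset Strict Implicit. Unset Printing Implicit Defensive.
Import Order.TTheory GRing.Theory Num.Theory.
Local Open Scope ring_scope.

Definition enc2pad (p : nat) (x y m z : int) : int :=
  ((p%:Z * x * z ^+ 2 + p%:Z * y * z + p%:Z * m + z) %% (p%:Z ^+ 2))%Z.

Definition dec2pad (p : nat) (x y c : int) : int :=
  let z := (c %% p%:Z)%Z in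
  let t := ((- (p%:Z * x * z ^+ 2) - p%:Z * y * z + c) %% (p%:Z ^+ 2))%Z in
  ((t - z) %/ p%:Z)%Z.

Definition zI (p : nat) (a : 'I_p) : int := (nat_of_ord a)%:Z.

(* Sample space: ((key X, key Y), randomness z), (index I, plaintexts M) *)
Notation Omega p L :=
  ((('I_p * 'I_p) * {ffun 'I_L -> 'I_p}) * ('I_L * {ffun 'I_L -> 'I_p}))%type.

Section Model.
Variables (p L : nat).

Definition keyX (om : Omega p L) : int := zI om.1.1.1.
Definition keyY (om : Omega p L) : int := zI om.1.1.2.
Definition rnd (om : Omega p L) (j : 'I_L) : int := zI (om.1.2 j).
Definition idx (om : Omega p L) : 'I_L := om.2.1.
Definition ptxt (om : Omega p L) (j : 'I_L) : int := zI (om.2.2 j).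

Definition Cj (om : Omega p L) (j : 'I_L) : int :=
  enc2pad p (keyX om) (keyY om) (ptxt om j) (rnd om j).
Definition Cprime (om : Omega p L) : int := (Cj om (idx om) %% p%:Z)%Z.
Definition Mprime (om : Omega p L) : int := dec2pad p (keyX om) (keyY om) (Cprime om).
Definition Mout (om : Omega p L) : int :=
  (((Cj om (idx om) - Cprime om + p%:Z * Mprime om) %% (p%:Z ^+ 2))%Z %/ p%:Z)%Z.

Variable R : realFieldType.
(* Dz : distribution of (z_1..z_L); Dm : distribution of (I, M_1..M_L);
   the key is uniform on Z_p^2; the three families are independent. *)
Variables (Dz : {ffun 'I_L -> 'I_p} -> R) (Dm : 'I_L * {ffun 'I_L -> 'I_p} -> R).

Definition weight (om : Omega p L) : R := (p%:R ^+ 2)^-1 * Dz om.1.2 * Dm om.2.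

Definition Pr (E : pred (Omega p L)) : R := \sum_(om | E om) weight om.

End Model.

(* Main.v *)
Require Import Defs.
From HB Require Import structures.
From mathcomp Require Import all_boot all_order all_algebra.
From mathcomp Require Import zify ring lra.
Import Order.TTheory GRing.Theory Num.Theory.
Local Open Scope ring_scope.

Lemma divmod_char (a d q r : int) : 0 < d -> 0 <= r < d -> a = q * d + r ->
  modz a d = r /\ divz a d = q.
Proof.
move=> d0 hr ->; split; first by rewrite modzMDl modz_small.
rewrite divzMDl ?gt_eqF // divz_small ?addr0 //.
move: hr => /andP[h1 h2]; apply/andP; split => //. rewrite gez0_abs; first by []. exact: ltW.
Qed.

Lemma modz_sq (a P : int) : modz (modz a (P ^+ 2)) P = modz a P.
Proof.
rewrite {2}(divz_eq a (P ^+ 2)) expr2 mulrA addrC.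
by rewrite addrC modzMDl.
Qed.

Lemma cprime_eq (p : nat) (x y m z : int) : (0 < p)%N -> 0 <= z < p%:Z ->
  modz (enc2pad p x y m z) p%:Z = z.
Proof.
move=> p0 hz; rewrite /enc2pad modz_sq.
have -> : p%:Z * x * z ^+ 2 + p%:Z * y * z + p%:Z * m + z
        = (x * z ^+ 2 + y * z + m) * p%:Z + z by ring.
by rewrite modzMDl modz_small.
Qed.

Lemma dec_eq (p : nat) (x y z : int) : (0 < p)%N -> 0 <= z < p%:Z ->
  dec2pad p x y z = modz (- (x * z ^+ 2) - y * z) p%:Z.
Proof.
move=> p0 hz; rewrite /dec2pad (modz_small hz).
set u := (- (x * z ^+ 2) - y * z).
have P0 : 0 < p%:Z by rewrite ltz_nat.
have hr : 0 <= modz u p%:Z < p%:Z by rewrite modz_ge0 ?gt_eqF ?ltz_pmod.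
have hb : 0 <= p%:Z * modz u p%:Z + z < p%:Z ^+ 2.
  move: hr hz; set r := modz u p%:Z; set P := p%:Z => /andP[r0 rP] /andP[z0 zP].
  apply/andP; split; first by nia.
  rewrite expr2; nia.
have he : - (p%:Z * x * z ^+ 2) - p%:Z * y * z + z
        = divz u p%:Z * p%:Z ^+ 2 + (p%:Z * modz u p%:Z + z).
  have E := divz_eq u p%:Z.
  have E2 : - (p%:Z * x * z ^+ 2) - p%:Z * y * z + z = p%:Z * u + z by rewrite /u; ring.
  rewrite E2; move: (divz u p%:Z) (modz u p%:Z) E => q r ->; ring.
have [-> _] := @divmod_char _ _ _ _ (exprn_gt0 2 P0) hb he.
have -> : p%:Z * modz u p%:Z + z - z = modz u p%:Z * p%:Z by ring.
by rewrite mulzK ?gt_eqF.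
Qed.

Lemma mout_eq (p : nat) (x y m z : int) : (0 < p)%N -> 0 <= z < p%:Z -> 0 <= m < p%:Z ->
  divz (modz (enc2pad p x y m z - modz (enc2pad p x y m z) p%:Z
     + p%:Z * dec2pad p x y (modz (enc2pad p x y m z) p%:Z)) (p%:Z ^+ 2)) p%:Z = m.
Proof.
move=> p0 hz hm; rewrite cprime_eq // dec_eq //.
have P0 : 0 < p%:Z by rewrite ltz_nat.
set u := (- (x * z ^+ 2) - y * z).
set e := enc2pad p x y m z.
have hb : 0 <= p%:Z * m < p%:Z ^+ 2.
  move: hm; set P := p%:Z => /andP[m0 mP].
  apply/andP; split; first by nia.
  rewrite expr2; nia.
have E1 := divz_eq u p%:Z.
set w := p%:Z * x * z ^+ 2 + p%:Z * y * z + p%:Z * m + z.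
have E0 : e = w - divz w (p%:Z ^+ 2) * p%:Z ^+ 2 by [].
rewrite E0; move: (divz w (p%:Z ^+ 2)) => q1.
move: (divz u p%:Z) (modz u p%:Z) E1 => q2 r E1.
have -> : w - q1 * p%:Z ^+ 2 - z + p%:Z * r = (- (q1 + q2)) * p%:Z ^+ 2 + p%:Z * m.
  have -> : r = u - q2 * p%:Z by rewrite E1; ring.
  rewrite /w /u; ring.
have [-> _] := @divmod_char ((- (q1 + q2)) * p%:Z ^+ 2 + p%:Z * m) _ (- (q1 + q2)) _ (exprn_gt0 2 P0) hb erefl.
by rewrite mulKz ?gt_eqF.
Qed.

Lemma sum_pair (R : realFieldType) (I J : finType) (f : I * J -> R) :
  \sum_x f x = \sum_i \sum_j f (i, j).
Proof. by rewrite pair_bigA; apply: eq_bigr => -[]. Qed.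

Section Fac.
Variables (p L : nat) (R : realFieldType).
Variables (Dz : {ffun 'I_L -> 'I_p} -> R) (Dm : 'I_L * {ffun 'I_L -> 'I_p} -> R).

Lemma factor (E : pred ('I_L * {ffun 'I_L -> 'I_p})) (G : pred ('I_p * 'I_p))
  (H : {ffun 'I_L -> 'I_p} -> 'I_L -> bool) (h : R) :
  (forall i, \sum_(z | H z i) Dz z = h) ->
  Pr Dz Dm (fun om => [&& E om.2, G om.1.1 & H om.1.2 om.2.1])
  = (p%:R ^+ 2)^-1 * #|G|%:R * h * \sum_(b | E b) Dm b.
Proof.
move=> hH.
rewrite /Pr big_mkcond sum_pair /=.
rewrite (@sum_pair R ('I_p * 'I_p)%type {ffun 'I_L -> 'I_p}) /=.
under eq_bigr do rewrite exchange_big /=.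
rewrite exchange_big /=.
rewrite [X in _ = _ * X]big_mkcond big_distrr /=; apply: eq_bigr => b _.
case: (E b) => /=; last first.
  by rewrite mulr0 big1 // => k _; rewrite big1.
rewrite (eq_bigr (fun k => if G k then (p%:R ^+ 2)^-1 * h * Dm b else 0)); last first.
  move=> k _; case: (G k) => /=; last by rewrite big1.
  rewrite -big_mkcond /weight /= -(hH b.1) big_distrr big_distrl /=.
  by apply: eq_bigr => z _; ring.
rewrite -big_mkcond sumr_const -mulr_natr; ring.
Qed.
End Fac.

Lemma zI_eq (p : nat) (a b : 'I_p) : (zI a == zI b) = (a == b).
Proof. by rewrite /zI eqz_nat. Qed.

Lemma zI_rng (p : nat) (a : 'I_p) : 0 <= zI a < p%:Z.
Proof. by rewrite /zI ltz_nat ltn_ord. Qed.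

Lemma Pr_ext (p L : nat) (R : realFieldType) Dz Dm (P Q : pred (Omega p L)) :
  P =1 Q -> Pr (R:=R) Dz Dm P = Pr Dz Dm Q.
Proof. by move=> h; rewrite /Pr (eq_bigl _ _ h). Qed.

Theorem proposition3 (p L : nat) (R : realFieldType)
  (Dz : {ffun 'I_L -> 'I_p} -> R) (Dm : 'I_L * {ffun 'I_L -> 'I_p} -> R) :
  prime p -> (5 <= p)%N -> (1 <= L)%N -> (L <= p.-1)%N ->
  (forall z, 0 <= Dz z) -> \sum_(z : {ffun 'I_L -> 'I_p}) Dz z = 1 ->
  (forall z : {ffun 'I_L -> 'I_p}, Dz z != 0 ->
     (forall j, nat_of_ord (z j) != 0%N) /\ (forall j k, j != k -> z j != z k)) ->
  (forall (j : 'I_L) (a : 'I_p), nat_of_ord a != 0%N ->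
     \sum_(z : {ffun 'I_L -> 'I_p} | z j == a) Dz z = (p.-1)%:R^-1) ->
  (forall im, 0 <= Dm im) -> \sum_im Dm im = 1 ->
  forall m c' m' : 'I_p,
    let A := fun om => (Cprime om == zI c') && (Mprime om == zI m') in
    0 < Pr Dz Dm A ->
    Pr Dz Dm (fun om => (Mout om == zI m) && A om) / Pr Dz Dm A
    = Pr Dz Dm (fun om => Mout om == zI m).
Proof.
move=> pr p5 L1 Lp Dz0 Dz1 supp unif Dm0 Dm1 m c' m' A PA.
have p0 : (0 < p)%N by apply: prime_gt0.
have hC : forall om : Omega p L, Cprime om = zI (om.1.2 om.2.1).
  by move=> om; rewrite /Cprime /Cj cprime_eq // zI_rng.
have hM : forall om : Omega p L, Mout om = zI (om.2.2 om.2.1).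
  by move=> om; rewrite /Mout /Mprime /Cprime /Cj mout_eq // zI_rng.
set G := fun k : ('I_p * 'I_p)%type => dec2pad p (zI k.1) (zI k.2) (zI c') == zI m'.
set H := fun (z : {ffun 'I_L -> 'I_p}) (i : 'I_L) => z i == c'.
set E := fun b : ('I_L * {ffun 'I_L -> 'I_p})%type => b.2 b.1 == m.
set hc : R := if nat_of_ord c' == 0%N then 0 else (p.-1)%:R^-1.
have hh : forall i, \sum_(z | H z i) Dz z = hc.
  move=> i; rewrite /hc /H; case: ifP => c0; last by rewrite unif // c0.
  rewrite big1 // => z /eqP zi; apply/eqP; apply: contraT => nz.
  by have := (supp z nz).1 i; rewrite zi c0.
have eA : Pr Dz Dm A = (p%:R ^+ 2)^-1 * #|G|%:R * hc * \sum_(b | xpredT b) Dm b.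
  rewrite -(@factor p L R Dz Dm _ _ _ _ hh); apply: Pr_ext => om.
  rewrite /A /Mprime hC zI_eq /G /H /=.
  by case: eqP => [->|_]; rewrite ?eqxx ?andbT ?andbF.
have eEA : Pr Dz Dm (fun om => (Mout om == zI m) && A om)
    = (p%:R ^+ 2)^-1 * #|G|%:R * hc * \sum_(b | E b) Dm b.
  rewrite -(@factor p L R Dz Dm _ _ _ _ hh); apply: Pr_ext => om.
  rewrite /A /Mprime hC hM !zI_eq /G /H /E /=.
  case: eqP => [_|_]; rewrite ?eqxx ?andbT ?andbF //=; by case: eqP => [->|_]; rewrite ?eqxx ?andbT ?andbF.
have hT : forall i : 'I_L, \sum_(z | (fun (_ : {ffun 'I_L -> 'I_p}) (_ : 'I_L) => true) z i) Dz z = 1 by move=> i; rewrite -Dz1.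
have eE : Pr Dz Dm (fun om => Mout om == zI m)
    = (p%:R ^+ 2)^-1 * #|@predT ('I_p * 'I_p)%type|%:R * 1 * \sum_(b | E b) Dm b.
  rewrite -(@factor p L R Dz Dm E predT (fun _ _ => true) 1 hT); apply: Pr_ext => om.
  by rewrite hM zI_eq /= andbT.
have cT : #|@predT ('I_p * 'I_p)%type| = (p * p)%N.
  by rewrite -[in RHS](card_ord p) -(card_prod ('I_p) ('I_p)); apply: eq_card.
rewrite eE eEA eA cT Dm1 natrM.
have pn0 : p%:R != 0 :> R by rewrite pnatr_eq0 -lt0n.
move: PA; rewrite eA Dm1 mulr1 => PA.
rewrite mulr1 in PA.
have c0 : p%:R ^- 2 * #|G|%:R * hc != 0 :> R by rewrite gt_eqF.
move: c0 PA; set c := _ * _ * hc => c0 _.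
rewrite expr2; field.
by rewrite pn0 c0.
Qed.
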